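(* The set of covectors $\mathcal L$ of a finitary affine oriented matroid $(E,\mathcal L)$ is countable.
   Context: A sign vector on a set $E$ is an element of $\{+,-,0\}^E$; $-X$ is defined by $(-X)(e)=-X(e)$. The zero set is $z(X)=\{e:X(e)=0\}$. The separator of $X,Y$ is $S(X,Y)=\{e\in E: X(e)\neq0\neq Y(e),\ X(e)\neq Y(e)\}$. The composition $X\circ Y$ is given by $(X\circ Y)(e)=X(e)$ if $X(e)\neq0$ and $Y(e)$ otherwise; $X\oplus Y$ is $0$ on $S(X,Y)$ and equals $X\circ Y$ elsewhere. For sets of sign vectors, $\mathcal A\circ\mathcal B=\{X\circ Y:X\in\mathcal A,Y\in\mathcal B\}$, $-\mathcal A=\{-X:X\in\mathcal A\}$. Sign vectors are partially ordered componentwise via $0<+$, $0<-$ ($+$ and $-$ incomparable). For $\mathcal L\subseteq\{+,-,0\}^E$ let $I_e(X,Y;\mathcal L)=\{Z\in\mathcal L:Z(e)=0,\ Z(f)=(X\circ Y)(f)\ \forall f\notin S(X,Y)\}$, $I(X,Y;\mathcal L)=\bigcup_{e\in S(X,Y)}I_e(X,Y;\mathcal L)$ and $\mathcal P(\mathcal L)=\{X\oplus(-Y):X,Y\in\mathcal L,\ I(X,-Y;\mathcal L)=I(-X,Y;\mathcal L)=\emptyset\}$. A finitary affine oriented matroid (FAOM) is a pair $(E,\mathcal L)$, $\mathcal L\subseteq\{+,-,0\}^E$, satisfying (S) $|S(X,Y)|<\infty$ for $X,Y\in\mathcal L$; (Z) $|z(X)|<\infty$ for $X\in\mathcal L$;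 (I) $\{Y\in\mathcal L:Y\le X\}$ is finite for each $X\in\mathcal L$; (FS) $\mathcal L\circ(-\mathcal L)\subseteq\mathcal L$; (SE) for all $X,Y\in\mathcal L$ and $e\in S(X,Y)$, $I_e(X,Y;\mathcal L)\ne\emptyset$; (P) $\mathcal P(\mathcal L)\circ\mathcal L\subseteq\mathcal L$. *)

(* Defs.v *)
From Stdlib Require Import List.
Import ListNotations.
Set Implicit Arguments.

Inductive sign : Type := Plus | Minus | Zero.

Definition sopp (s : sign) : sign :=
  match s with Plus => Minus | Minus => Plus | Zero => Zero end.

Definition signvec (E : Type) := E -> sign.

Definition svneg {E : Type} (X : signvec E) : signvec E := fun e => sopp (X e).

Definition zeroset {E : Type} (X : signvec E) : E -> Prop := fun e => X e = Zero.

Definition sep {E : Type} (X Y : signvec E) : E -> Prop :=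
  fun e => X e <> Zero /\ Y e <> Zero /\ X e <> Y e.

Definition comp {E : Type} (X Y : signvec E) : signvec E :=
  fun e => match X e with Zero => Y e | s => s end.

(* X (+) Y : 0 on S(X,Y), X o Y elsewhere *)
Definition oplus {E : Type} (X Y : signvec E) : signvec E :=
  fun e => match X e, Y e with
           | Plus, Minus => Zero
           | Minus, Plus => Zero
           | Zero, t => t
           | s, _ => s
           end.

Definition svle {E : Type} (X Y : signvec E) : Prop :=
  forall e, X e = Zero \/ X e = Y e.

Definition finite_set {E : Type} (A : E -> Prop) : Prop :=
  exists l : list E, forall e, A e -> In e l.

Definition finite_svset {E : Type} (A : signvec E -> Prop) : Prop :=
  exists l : list (signvec E), forall X, A X -> In X l.

Definition Ie {E : Type} (L : signvec E -> Prop) (X Y : signvec E) (e : E)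
  : signvec E -> Prop :=
  fun Z => L Z /\ Z e = Zero /\ (forall f, ~ sep X Y f -> Z f = comp X Y f).

Definition Iset {E : Type} (L : signvec E -> Prop) (X Y : signvec E)
  : signvec E -> Prop :=
  fun Z => exists e, sep X Y e /\ Ie L X Y e Z.

Definition Pset {E : Type} (L : signvec E -> Prop) : signvec E -> Prop :=
  fun W => exists X Y, L X /\ L Y /\
     (forall Z, ~ Iset L X (svneg Y) Z) /\
     (forall Z, ~ Iset L (svneg X) Y Z) /\
     W = oplus X (svneg Y).

Definition FAOM (E : Type) (L : signvec E -> Prop) : Prop :=
  (* (S) *) (forall X Y, L X -> L Y -> finite_set (sep X Y)) /\
  (* (Z) *) (forall X, L X -> finite_set (zeroset X)) /\
  (* (I) *) (forall X, L X -> finite_svset (fun Y => L Y /\ svle Y X)) /\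
  (* (FS) *) (forall X Y, L X -> L Y -> L (comp X (svneg Y))) /\
  (* (SE) *) (forall X Y e, L X -> L Y -> sep X Y e -> exists Z, Ie L X Y e Z) /\
  (* (P) *) (forall W Y, Pset L W -> L Y -> L (comp W Y)).

Definition countable_svset {E : Type} (L : signvec E -> Prop) : Prop :=
  exists f : {X : signvec E | L X} -> nat,
    forall x y, f x = f y -> x = y.

(* Main.v *)
Require Import Defs.
From Stdlib Require Import List Classical ClassicalEpsilon FunctionalExtensionality ProofIrrelevance Relations Cantor Lia.
Import ListNotations.

Section S.
Variable E : Type.
Variable L : signvec E -> Prop.
Hypothesis HL : FAOM L.

Definition R (X Y : signvec E) := L X /\ L Y /\ (svle X Y \/ svle Y X).

Lemma comp_closed X Y : L X -> L Y -> L (comp X Y).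
Proof.
  destruct HL as (_ & _ & _ & HFS & _).
  intros HX HY.
  replace (comp X Y) with (comp X (svneg (comp X (svneg Y)))).
  - apply HFS; auto.
  - apply functional_extensionality; intro e; unfold comp, svneg.
    destruct (X e), (Y e); reflexivity.
Qed.

Lemma remove_cover (e : E) (l : list E) : forall (A : E -> Prop),
  In e l -> (forall x, A x -> In x l /\ x <> e) ->
  exists l', length l' < length l /\ forall x, A x -> In x l'.
Proof.
  induction l as [|a t IH]; intros A He HA; [destruct He|].
  destruct (classic (a = e)) as [<-|Hne].
  - exists t; split; [simpl; lia|].
    intros x Hx; destruct (HA x Hx) as [[->|H] H2]; [congruence|auto].
  - destruct He as [He|He]; [congruence|].
    destruct (IH (fun x => A x /\ x <> a) He) as (l'' & Hlen & Hc).
    + intros x [Hx Hxa]; destruct (HA x Hx) as [[->|H] H2]; [congruence|auto].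
    + exists (a :: l''); split; [simpl; lia|].
      intros x Hx; destruct (classic (x = a)) as [->|Hxa]; [left; auto|right; auto].
Qed.

Lemma connect_n : forall n X Y l, L X -> L Y ->
  (forall e, sep X Y e -> In e l) -> length l <= n ->
  clos_refl_trans _ R X Y.
Proof.
  destruct HL as (_ & _ & _ & _ & HSE & _).
  induction n as [|n IH]; intros X Y l HX HY Hc Hlen.
  - assert (Hn : forall e, ~ sep X Y e).
    { intros e He; apply Hc in He; destruct l; [destruct He| simpl in Hlen; lia]. }
    apply rt_trans with (comp X Y).
    + apply rt_step; repeat split; auto using comp_closed; left.
      intro e; unfold comp; destruct (X e); auto.
    + apply rt_step; repeat split; auto using comp_closed; right.
      intro e; unfold comp; specialize (Hn e); unfold sep in Hn.
      destruct (X e) eqn:EX, (Y e) eqn:EY; auto; exfalso; apply Hn; repeat split; congruence.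
  - destruct (classic (exists e, sep X Y e)) as [[e He]|Hn].
    + destruct (HSE X Y e HX HY He) as (Z & HZ & HZe & HZf).
      assert (Hsub1 : forall f, sep X Z f -> In f l /\ f <> e).
      { intros f Hf; split.
        - apply Hc. apply NNPP; intro Hnf. specialize (HZf f Hnf).
          unfold sep, comp in *. rewrite HZf in Hf. destruct (X f); intuition.
        - intros ->. unfold sep in Hf; intuition. }
      assert (Hsub2 : forall f, sep Z Y f -> In f l /\ f <> e).
      { intros f Hf; split.
        - apply Hc. apply NNPP; intro Hnf. pose proof (HZf f Hnf) as Hz.
          apply Hnf. unfold sep, comp in *. rewrite Hz in Hf.
          destruct (X f), (Y f); intuition.
        - intros ->. unfold sep in Hf; intuition. }
      destruct (remove_cover e l (sep X Z) (Hc e He) Hsub1) as (l1 & H1 & H1c).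
      destruct (remove_cover e l (sep Z Y) (Hc e He) Hsub2) as (l2 & H2 & H2c).
      apply rt_trans with Z.
      * apply (IH X Z l1); auto; lia.
      * apply (IH Z Y l2); auto; lia.
    + apply (IH X Y []); auto; [|simpl; lia].
      intros e He; exfalso; apply Hn; eauto.
Qed.

Lemma connect X Y : L X -> L Y -> clos_refl_trans _ R X Y.
Proof.
  destruct HL as (HS & _).
  intros HX HY. destruct (HS X Y HX HY) as [l Hl].
  apply (connect_n (length l) X Y l); auto.
Qed.

Definition upd (Y : signvec E) (a : E) (s : sign) : signvec E :=
  fun e => if excluded_middle_informative (e = a) then s else Y e.

Lemma ext_fin : forall lz (X : signvec E), exists l, forall Y,
  (forall e, ~ In e lz -> Y e = X e) -> In Y l.
Proof.
  induction lz as [|a t IH]; intros X.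
  - exists [X]; intros Y HY; left; apply functional_extensionality; intro e.
    symmetry; apply HY; auto.
  - destruct (IH X) as [l Hl].
    exists (flat_map (fun Z => [upd Z a Plus; upd Z a Minus; upd Z a Zero]) l).
    intros Y HY. apply in_flat_map. exists (upd Y a (X a)). split.
    + apply Hl. intros e He. unfold upd.
      destruct (excluded_middle_informative (e = a)) as [->|Hne]; auto.
      apply HY. intros [->|H]; auto.
    + assert (Y = upd (upd Y a (X a)) a (Y a)) as HE.
      { apply functional_extensionality; intro e; unfold upd.
        destruct (excluded_middle_informative (e = a)) as [->|]; auto. }
      destruct (Y a) eqn:Ya; rewrite HE at 1; simpl; auto.
Qed.

Lemma nb_fin X : L X -> exists l, forall Y, R X Y -> In Y l.
Proof.
  destruct HL as (_ & HZ & HI & _).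
  intros HX. destruct (HZ X HX) as [lz Hlz]. destruct (HI X HX) as [ld Hld].
  destruct (ext_fin lz X) as [lu Hlu].
  exists (lu ++ ld). intros Y (_ & HY & [Hle|Hle]); apply in_or_app.
  - left; apply Hlu. intros e He. destruct (Hle e) as [H|H]; auto.
    exfalso; apply He, Hlz; exact H.
  - right; apply Hld; auto.
Qed.

Lemma step_ex (l : list (signvec E)) : exists l', forall Y,
  (exists X, In X l /\ R X Y) -> In Y l'.
Proof.
  induction l as [|a t [l' Hl']].
  - exists []; intros Y (X & [] & _).
  - destruct (classic (L a)) as [Ha|Ha].
    + destruct (nb_fin a Ha) as [la Hla]. exists (la ++ l'). intros Y (X & [->|HX] & HR);
      apply in_or_app; [left; auto|right; eauto].
    + exists l'. intros Y (X & [->|HX] & HR); [destruct HR; contradiction|eauto].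
Qed.

Definition step l := proj1_sig (constructive_indefinite_description _ (step_ex l)).

Lemma step_spec l X Y : In X l -> R X Y -> In Y (step l).
Proof.
  unfold step; destruct (constructive_indefinite_description _ (step_ex l)); simpl; eauto.
Qed.

Lemma count_ne X0 : L X0 -> countable_svset L.
Proof.
  intros H0.
  set (B := fun n => Nat.iter n step [X0]).
  assert (Hreach : forall Y, L Y -> exists n, In Y (B n)).
  { intros Y HY. pose proof (connect X0 Y H0 HY) as Hc.
    apply clos_rt_rtn1 in Hc. clear HY. induction Hc as [|Y Z HR Hc IH].
    - exists 0; simpl; auto.
    - destruct IH as [n Hn].
      exists (S n). simpl. apply (step_spec _ Y); auto. }
  assert (Hex : forall x : {X | L X}, exists k,
     nth_error (B (fst (of_nat k))) (snd (of_nat k)) = Some (proj1_sig x)).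
  { intros [X HX]. destruct (Hreach X HX) as [n Hn].
    apply In_nth_error in Hn. destruct Hn as [i Hi].
    exists (to_nat (n, i)). rewrite cancel_of_to. simpl. auto. }
  exists (fun x => proj1_sig (constructive_indefinite_description _ (Hex x))).
  intros x y Hxy.
  destruct (constructive_indefinite_description _ (Hex x)) as [kx Hx].
  destruct (constructive_indefinite_description _ (Hex y)) as [ky Hy].
  simpl in Hxy. subst ky. rewrite Hx in Hy. injection Hy. intro Heq.
  destruct x as [x px], y as [y py]. simpl in Heq. subst y.
  f_equal. apply proof_irrelevance.
Qed.

End S.

Theorem corollary3p7 (E : Type) (L : signvec E -> Prop) :
  FAOM L -> countable_svset L.
Proof.
  intros HL.
  destruct (classic (exists X, L X)) as [[X0 H0]|Hn].
  - exact (count_ne E L HL X0 H0).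
  - exists (fun _ => 0). intros [x px]; exfalso; apply Hn; eauto.
Qed.
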